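(* For every integer $n\ge 3$, \[ R_n(x)=R(\Gamma_{n-1},x)+x^3R(\Gamma_{n-3},x). \]
   Context: For $n\ge1$ let $\Xi_n$ (the $L$-fence) be the poset on $\{x_1,\dots,x_n\}$ whose cover relations are exactly: $x_2\prec x_1$, $x_3\prec x_2$, and for $3\le i\le n-1$, $x_i\prec x_{i+1}$ if $i$ is odd and $x_{i+1}\prec x_i$ if $i$ is even (so $x_1>x_2>x_3<x_4>x_5<x_6>\cdots$, keeping only the relations among elements that exist). A filter of a poset $P$ is a subset $F$ such that $x\in F$, $x\le y$ imply $y\in F$. $\Omega_n$ (the $n$-th matchable Lucas distributive lattice) is the set of filters of $\Xi_n$ ordered by reverse inclusion; $\Omega_0$ is the one-element lattice. The rank of a filter $F\in\Omega_n$ is $n-|F|$, and the rank generating function is $R_n(x)=\sum_{F\in\Omega_n}x^{\,n-|F|}$ (so $R_0(x)=1$). For $m\ge1$ let $Z_m$ be the fence on $\{z_1,\dots,z_m\}$ with cover relations $z_{i+1}\prec z_i$ for odd $i$ and $z_i\prec z_{i+1}$ for even $i$ ($1\le i\le m-1$), i.e. $z_1>z_2<z_3>z_4<\cdots$; $\Gamma_m$ (the Fibonacci cube/lattice) is the lattice of filters of $Z_m$ under reverse inclusion, with $R(\Gamma_m,x)=\sum_{F}x^{\,m-|F|}$ summing over filters $F$ of $Z_m$, and $R(\Gamma_0,x)=1$. *)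

(* Defs.v *)
From mathcomp Require Import all_boot all_order all_algebra.
Set Implicit Arguments. Unset Strict Implicit. Unset Printing Implicit Defensive.
Import GRing.Theory.
Local Open Scope ring_scope.

(* Elements x_1..x_n are encoded by i : 'I_n with x_{i+1} <-> i.
   [cov a b] (1-based labels) means x_a is covered by x_b, i.e. x_a ≺ x_b. *)

Definition Xi_cov (a b : nat) : bool :=
  [|| (a == 2%N) && (b == 1%N),
      (a == 3%N) && (b == 2%N),
      [&& (3 <= a)%N, odd a & b == a.+1]
    | [&& (3 <= b)%N, ~~ odd b & a == b.+1]].

Definition Z_cov (a b : nat) : bool :=
  ((odd b) && (a == b.+1)) || [&& (0 < a)%N, ~~ odd a & b == a.+1].

Definition poset_le (cov : nat -> nat -> bool) (n : nat) : rel 'I_n :=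
  connect (fun u v : 'I_n => cov (u.+1) (v.+1)).

Definition is_filter (cov : nat -> nat -> bool) (n : nat) (F : {set 'I_n}) : bool :=
  [forall x : 'I_n, forall y : 'I_n, ((x \in F) && poset_le cov x y) ==> (y \in F)].

Definition rank_gen (cov : nat -> nat -> bool) (n : nat) : {poly int} :=
  \sum_(F : {set 'I_n} | is_filter cov F) 'X^(n - #|F|).

Definition R_Omega (n : nat) : {poly int} := rank_gen Xi_cov n.
Definition R_Gamma (m : nat) : {poly int} := rank_gen Z_cov m.

(* Main.v *)
Require Import Defs.
From mathcomp Require Import all_boot all_order all_algebra zify.
Lemma XiZ1 a b : (0 < a)%N -> (0 < b)%N -> Xi_cov a.+1 b.+1 = Z_cov a b.
Proof.
case: a => // a _; case: b => // b _.
rewrite /Xi_cov /Z_cov /= !eqSS.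
apply/idP/idP.
  case/or4P.
  - by case/andP=> /eqP.
  - by case/andP=> /eqP -> /eqP ->.
  - by case/and3P => _ H /eqP ->; rewrite /= H /= eqxx orbT.
  - by case/and3P => _ H /eqP ->; rewrite /= negbK in H; rewrite H eqxx.
case/orP.
  case/andP => H /eqP ->; case: b H => [|b] H //=.
  by rewrite H /= eqxx !orbT.
case/andP => H /eqP ->; case: a H => [|a] H //=.
by rewrite H /= eqxx !orbT.
Qed.
Lemma XiZ3 a b : (0 < a)%N -> Xi_cov a.+3 b.+3 = Z_cov a b.
Proof.
case: a => // a _.
by rewrite /Xi_cov /Z_cov /= !eqSS !negbK orbC.
Qed.
Lemma Xi_small a b : (b <= 3)%N -> Xi_cov a.+4 b = false.
Proof. by rewrite /Xi_cov; case: b => [|[|[|[|b]]]] //= _; rewrite ?andbF. Qed.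

Lemma filterP (cov : nat -> nat -> bool) n (F : {set 'I_n}) :
  reflect (forall u v : 'I_n, cov u.+1 v.+1 -> u \in F -> v \in F) (is_filter cov F).
Proof.
apply: (iffP forallP) => H.
  move=> u v c uF; have /forallP/(_ v) := H u.
  by rewrite uF /poset_le connect1.
move=> x; apply/forallP => y; apply/implyP => /andP[xF /connectP[p pth ->]].
elim: p x xF pth => [|z p IH] x xF //= /andP[c pth].
exact: (IH z (H _ _ c xF) pth).
Qed.
Import GRing.Theory.
Local Open Scope ring_scope.

Lemma part1 m : \sum_(F : {set 'I_m.+3} | is_filter Xi_cov F && (ord0 \in F)) 'X^(m.+3 - #|F|)
  = R_Gamma m.+2 :> {poly int}.
Proof.
rewrite /R_Gamma /rank_gen.
pose h (G : {set 'I_m.+2}) : {set 'I_m.+3} := ord0 |: [set lift ord0 i | i in G].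
have memh G i : (lift ord0 i \in h G) = (i \in G).
  rewrite in_setU1 mem_imset; last exact: lift_inj.
  have -> : (lift ord0 i == ord0) = false by apply/negbTE; rewrite eq_sym neq_lift.
  by [].
have h0 G : ord0 \in h G by rewrite setU11.
rewrite (reindex h).
  apply: eq_big => G.
    rewrite h0 andbT; apply/filterP/filterP => H u v.
      move=> c uG; rewrite -memh; apply: (H (lift ord0 u)); last by rewrite memh.
      rewrite !lift0 XiZ1 //.
    case: (unliftP ord0 v) => [v' ->|->] c; last by rewrite h0.
    case: (unliftP ord0 u) c => [u' ->|->] c; last by move: c; rewrite lift0 /Xi_cov /= => /and3P[_ _]; rewrite eqSS.
    rewrite !memh; apply: H; move: c; by rewrite !lift0 XiZ1.
  move=> _; congr ('X^ _).
  rewrite /h cardsU1 card_imset; last exact: lift_inj.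
  have -> : (ord0 \notin [set lift ord0 i | i in G]).
    by apply/imsetP => -[i _ /eqP]; rewrite (negbTE (neq_lift _ _)).
  by rewrite add1n subSS.
exists (fun F : {set 'I_m.+3} => [set i : 'I_m.+2 | lift ord0 i \in F]).
  by move=> G _; apply/setP => i; rewrite inE memh.
move=> F; rewrite inE => /andP[_ F0]; apply/setP => j.
by case: (unliftP ord0 j) => [j' ->|->]; rewrite ?memh ?inE ?h0.
Qed.

Lemma part2 m : \sum_(F : {set 'I_m.+3} | is_filter Xi_cov F && (ord0 \notin F)) 'X^(m.+3 - #|F|)
  = 'X^3 * R_Gamma m :> {poly int}.
Proof.
rewrite /R_Gamma /rank_gen mulr_sumr.
pose L3 (i : 'I_m) : 'I_m.+3 := lift ord0 (lift ord0 (lift ord0 i)).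
have L3inj : injective L3 by move=> i j /lift_inj/lift_inj/lift_inj.
pose h (G : {set 'I_m}) : {set 'I_m.+3} := L3 @: G.
have memh G i : (lift ord0 (lift ord0 (lift ord0 i)) \in h G) = (i \in G).
  exact: (mem_imset _ _ L3inj).
have hge G (j : 'I_m.+3) : j \in h G -> (3 <= j)%N.
  by case/imsetP => i _ ->; rewrite /L3 !lift0.
rewrite (reindex h).
  apply: eq_big => G.
    have -> : ord0 \notin h G by apply/negP => /hge.
    rewrite andbT; apply/filterP/filterP => H u v.
      move=> c uG; rewrite -memh; apply: (H (L3 u)); last by rewrite memh.
      by rewrite /L3 !lift0 XiZ3.
    move=> c /imsetP[u' uG Eu]; subst u.
    case: (unliftP ord0 v) c => [v1 ->|->] c; last by move: c; rewrite /L3 !lift0 Xi_small.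
    case: (unliftP ord0 v1) c => [v2 ->|->] c; last by move: c; rewrite /L3 !lift0 Xi_small.
    case: (unliftP ord0 v2) c => [v3 ->|->] c; last by move: c; rewrite /L3 !lift0 Xi_small.
    rewrite memh; apply: (H u'); last exact: uG.
    by move: c; rewrite /L3 !lift0 XiZ3.
  move=> _; rewrite /h card_imset // -exprD; congr ('X^ _).
  have := max_card G; rewrite card_ord => le; rewrite addnBA // add3n.
exists (fun F : {set 'I_m.+3} => [set i : 'I_m | L3 i \in F]).
  by move=> G _; apply/setP => i; rewrite inE memh.
move=> F; rewrite inE => /andP[/filterP fF F0].
have F1 : lift ord0 ord0 \notin F.
  apply/negP => H1; move/negP: F0; apply; apply: (fF _ _ _ H1); by rewrite lift0.
have F2 : lift ord0 (lift ord0 ord0) \notin F.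
  apply/negP => H1; move/negP: F1; apply; apply: (fF _ _ _ H1); by rewrite !lift0.
apply/setP => j.
case: (unliftP ord0 j) => [j1 ->|->]; last first.
  by rewrite (negbTE F0); apply/negP => /hge.
case: (unliftP ord0 j1) => [j2 ->|->]; last first.
  by rewrite (negbTE F1); apply/negP => /hge; rewrite lift0.
case: (unliftP ord0 j2) => [j3 ->|->]; last first.
  by rewrite (negbTE F2); apply/negP => /hge; rewrite !lift0.
by rewrite memh inE.
Qed.

Theorem mainTheorem1 (n : nat) (hn : (3 <= n)%N) :
  R_Omega n = R_Gamma (n - 1) + 'X^3 * R_Gamma (n - 3).
Proof.
case: n hn => [|[|[|m]]] // _.
rewrite /R_Omega /rank_gen (bigID (fun F : {set 'I_m.+3} => ord0 \in F)) /=.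
rewrite part1 part2 subn1 /= subSS subSS subSS subn0.
by [].
Qed.
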